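(* For all contexts $\Gamma,\Delta$, terms $M,A$ and substitution $\sigma$: if $\sigma:\Gamma\rightharpoonup\Delta$, $\Delta\ \mathrm{ok}$ and $\Gamma\vdash M:A$, then $\Delta\vdash M\bullet\sigma:A\bullet\sigma$.
   Context: Let $\mathcal V$ (the variables) be a type with decidable equality, equipped with functions $\mathrm{encode}:\mathcal V\to\mathbb N$ and $\mathrm{decode}:\mathbb N\to\mathcal V$ such that $\mathrm{encode}(\mathrm{decode}\,n)=n$ for all $n$. Let $\mathcal C$ (the constants) be any type. Terms $\Lambda$ are generated by: $c\,k$ ($k\in\mathcal C$), $v\,x$ ($x\in\mathcal V$), $\lambda[x:A]M$, $\Pi[x:A]B$ and $M\cdot N$; in $\lambda[x:A]M$ and $\Pi[x:A]B$ the name $x$ binds in $M$ (resp. $B$) but not in $A$. Terms are raw first-order syntax (not identified up to renaming of bound variables) and $\equiv$ denotes syntactic identity. The list of free variables is $\mathrm{fv}(c\,k)=[\,]$, $\mathrm{fv}(v\,x)=[x]$, $\mathrm{fv}(\lambda[x:A]M)=\mathrm{fv}\,A\mathbin{+\!\!+}(\mathrm{fv}\,M-x)$, $\mathrm{fv}(\Pi[x:A]B)=\mathrm{fv}\,A\mathbin{+\!\!+}(\mathrm{fv}\,B-x)$, $\mathrm{fv}(M\cdot N)=\mathrm{fv}\,M\mathbin{+\!\!+}\mathrm{fv}\,N$, where $\mathbin{+\!\!+}$ is list concatenation and $xs-x$ deletes every occurrence of $x$ from $xs$. Fix a function $\chi':\mathrm{List}\,\mathbb N\to\mathbb N$ with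 $\chi'(ns)\notin ns$ for every list $ns$, and put $X'(xs)=\mathrm{decode}(\chi'(\mathrm{map}\ \mathrm{encode}\ xs))$. A substitution is any function $\sigma:\mathcal V\to\Lambda$; $\iota=v$ is the identity substitution; $(\sigma,x:=N)(y)=N$ if $y=x$ and $\sigma\,y$ otherwise. For a substitution $\sigma$ and a list $xs$ of variables, $X(\sigma,xs)=X'(\text{concatenation of the lists }\mathrm{fv}(\sigma\,y)\text{ for }y\in xs)$. The action $M\bullet\sigma$ is defined by structural recursion: $c\,k\bullet\sigma=c\,k$; $v\,x\bullet\sigma=\sigma\,x$; $(M\cdot N)\bullet\sigma=(M\bullet\sigma)\cdot(N\bullet\sigma)$; $(\lambda[x:A]M)\bullet\sigma=\lambda[y:A\bullet\sigma](M\bullet(\sigma,x:=v\,y))$ with $y=X(\sigma,\mathrm{fv}\,M-x)$; $(\Pi[x:A]B)\bullet\sigma=\Pi[y:A\bullet\sigma](B\bullet(\sigma,x:=v\,y))$ with $y=X(\sigma,\mathrm{fv}\,B-x)$. Unary substitution is $M[x:=N]=M\bullet(\iota,x:=N)$. $\alpha$-conversion $\sim_\alpha$ is the inductively defined relation with rules: $c\,k\sim_\alpha c\,k$; $v\,x\sim_\alpha v\,x$; $M\cdot N\sim_\alpha M'\cdot N'$ if $M\sim_\alpha M'$ and $N\sim_\alpha N'$; $\lambda[x:A]M\sim_\alpha\lambda[x':A']M'$ if $A\sim_\alpha A'$ and there is a variable $y$ with $y\notin\mathrm{fv}\,M-x$, $y\notin\mathrm{fv}\,M'-x'$ and $M[x:=v\,y]\equiv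 M'[x':=v\,y]$; and the same rule with $\Pi$ in place of $\lambda$. $\beta$-contraction is $(\lambda[x:A]M)\cdot N\ \triangleright_\beta\ M[x:=N]$. One-step $\beta$-reduction $\to_\beta$ is its contextual closure, inductively: $M\to_\beta N$ if $M\triangleright_\beta N$; $\lambda[x:A]M\to_\beta\lambda[x:A]M'$ and $\Pi[x:A]M\to_\beta\Pi[x:A]M'$ if $M\to_\beta M'$; $\lambda[x:A]M\to_\beta\lambda[x:A']M$ and $\Pi[x:A]M\to_\beta\Pi[x:A']M$ if $A\to_\beta A'$; $M\cdot P\to_\beta N\cdot P$ and $P\cdot M\to_\beta P\cdot N$ if $M\to_\beta N$. $\beta$-conversion $\simeq_\beta$ is the equivalence (reflexive–symmetric–transitive) closure of $\sim_\alpha\cup\to_\beta$. Pure Type System: fix a binary relation $\mathcal A\subseteq\mathcal C\times\mathcal C$ (axioms) and a ternary relation $\mathcal R\subseteq\mathcal C\times\mathcal C\times\mathcal C$ (rules). A context is a finite list of pairs $(x,A)$ with $x\in\mathcal V$, $A\in\Lambda$; $\Gamma,x:A$ denotes the list $(x,A)::\Gamma$; $\mathrm{dom}\,\Gamma$ is the list of first components; $(x,A)\in\Gamma$ is list membership. The judgments $\Gamma\ \mathrm{ok}$ and $\Gamma\vdash M:A$ are defined mutually inductively by: (nil) $[\,]\ \mathrm{ok}$; (cons) if $\Gamma\ \mathrm{ok}$, $\Gamma\vdash A:c\,s$ and $x\notin\mathrm{dom}\,\Gamma$ then $\Gamma,x:A\ \mathrm{ok}$; (sort) if $\Gamma\ \mathrm{ok}$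 and $\mathcal A\,s_1\,s_2$ then $\Gamma\vdash c\,s_1:c\,s_2$; (var) if $\Gamma\ \mathrm{ok}$ and $(x,A)\in\Gamma$ then $\Gamma\vdash v\,x:A$; (prod) if $\mathcal R\,s_1\,s_2\,s_3$, $\Gamma\vdash A:c\,s_1$ and for every $y\notin\mathrm{dom}\,\Gamma$, $\Gamma,y:A\vdash B[x:=v\,y]:c\,s_2$, then $\Gamma\vdash\Pi[x:A]B:c\,s_3$; (abs) if $\mathcal R\,s_1\,s_2\,s_3$, $\Gamma\vdash A:c\,s_1$, for every $z\notin\mathrm{dom}\,\Gamma$, $\Gamma,z:A\vdash B[y:=v\,z]:c\,s_2$, and for every $z\notin\mathrm{dom}\,\Gamma$, $\Gamma,z:A\vdash M[x:=v\,z]:B[y:=v\,z]$, then $\Gamma\vdash\lambda[x:A]M:\Pi[y:A]B$; (app) if $\Gamma\vdash M:\Pi[x:A]B$, $\Gamma\vdash N:A$ and $\Gamma\vdash B[x:=N]:c\,s$ for some $s$, then $\Gamma\vdash M\cdot N:B[x:=N]$; (conv) if $\Gamma\vdash M:A$, $A\simeq_\beta B$ and $\Gamma\vdash B:c\,s$ for some $s$, then $\Gamma\vdash M:B$. (The premises quantified over all fresh names in (prod) and (abs) are infinitely branching.) A substitution $\sigma$ is well-typed from $\Gamma$ to $\Delta$, written $\sigma:\Gamma\rightharpoonup\Delta$, if for every $(x,A)\in\Gamma$ we have $\Delta\vdash\sigma\,x:A\bullet\sigma$. *)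

(* Defs.v *)
(* raw first-order syntax of a Pure Type System with names. *)
From Stdlib Require Import List Relations.
Import ListNotations.
Set Implicit Arguments.

Record VarType := {
  vsort :> Type;
  v_eq_dec : forall x y : vsort, {x = y} + {x <> y};
  v_encode : vsort -> nat;
  v_decode : nat -> vsort;
  v_encode_decode : forall n, v_encode (v_decode n) = n
}.

Inductive term (V : VarType) (C : Type) : Type :=
| cst : C -> term V C
| var : V -> term V C
| lam : V -> term V C -> term V C -> term V C   (* lam x A M = λ[x:A]M *)
| pi  : V -> term V C -> term V C -> term V C   (* pi x A B = Π[x:A]B *)
| app : term V C -> term V C -> term V C.

Arguments cst {V C}.
Arguments var {V C}.
Arguments lam {V C}.
Arguments pi {V C}.
Arguments app {V C}.

Definition vremove {V : VarType} (xs : list V) (x : V) : list V :=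
  filter (fun y => if v_eq_dec V y x then false else true) xs.

Fixpoint fv {V : VarType} {C : Type} (M : term V C) : list V :=
  match M with
  | cst _ => []
  | var x => [x]
  | lam x A M => fv A ++ vremove (fv M) x
  | pi x A B => fv A ++ vremove (fv B) x
  | app M N => fv M ++ fv N
  end.

Definition subst_t (V : VarType) (C : Type) := V -> term V C.

Definition iota {V : VarType} {C : Type} : subst_t V C := var.

Definition upd {V : VarType} {C : Type} (sigma : subst_t V C) (x : V) (N : term V C)
  : subst_t V C :=
  fun y => if v_eq_dec V y x then N else sigma y.

Definition Xp {V : VarType} (chi : list nat -> nat) (xs : list V) : V :=
  v_decode V (chi (map (v_encode V) xs)).

Definition Xs {V : VarType} {C : Type} (chi : list nat -> nat)
  (sigma : subst_t V C) (xs : list V) : V :=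
  Xp chi (flat_map (fun y => fv (sigma y)) xs).

Fixpoint sapply {V : VarType} {C : Type} (chi : list nat -> nat)
  (M : term V C) (sigma : subst_t V C) : term V C :=
  match M with
  | cst k => cst k
  | var x => sigma x
  | app M N => app (sapply chi M sigma) (sapply chi N sigma)
  | lam x A M =>
      let y := Xs chi sigma (vremove (fv M) x) in
      lam y (sapply chi A sigma) (sapply chi M (upd sigma x (var y)))
  | pi x A B =>
      let y := Xs chi sigma (vremove (fv B) x) in
      pi y (sapply chi A sigma) (sapply chi B (upd sigma x (var y)))
  end.

Definition subst1 {V : VarType} {C : Type} (chi : list nat -> nat)
  (M : term V C) (x : V) (N : term V C) : term V C :=
  sapply chi M (upd iota x N).

Inductive alpha {V : VarType} {C : Type} (chi : list nat -> nat)
  : term V C -> term V C -> Prop :=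
| alpha_cst : forall k, alpha chi (cst k) (cst k)
| alpha_var : forall x, alpha chi (var x) (var x)
| alpha_app : forall M N M' N', alpha chi M M' -> alpha chi N N' ->
    alpha chi (app M N) (app M' N')
| alpha_lam : forall x A M x' A' M' y,
    alpha chi A A' ->
    ~ In y (vremove (fv M) x) -> ~ In y (vremove (fv M') x') ->
    subst1 chi M x (var y) = subst1 chi M' x' (var y) ->
    alpha chi (lam x A M) (lam x' A' M')
| alpha_pi : forall x A M x' A' M' y,
    alpha chi A A' ->
    ~ In y (vremove (fv M) x) -> ~ In y (vremove (fv M') x') ->
    subst1 chi M x (var y) = subst1 chi M' x' (var y) ->
    alpha chi (pi x A M) (pi x' A' M').

Inductive beta_contr {V : VarType} {C : Type} (chi : list nat -> nat)
  : term V C -> term V C -> Prop :=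
| beta_redex : forall x A M N,
    beta_contr chi (app (lam x A M) N) (subst1 chi M x N).

Inductive beta_step {V : VarType} {C : Type} (chi : list nat -> nat)
  : term V C -> term V C -> Prop :=
| bs_contr : forall M N, beta_contr chi M N -> beta_step chi M N
| bs_lam_body : forall x A M M', beta_step chi M M' ->
    beta_step chi (lam x A M) (lam x A M')
| bs_pi_body : forall x A M M', beta_step chi M M' ->
    beta_step chi (pi x A M) (pi x A M')
| bs_lam_dom : forall x A A' M, beta_step chi A A' ->
    beta_step chi (lam x A M) (lam x A' M)
| bs_pi_dom : forall x A A' M, beta_step chi A A' ->
    beta_step chi (pi x A M) (pi x A' M)
| bs_app_l : forall M N P, beta_step chi M N ->
    beta_step chi (app M P) (app N P)
| bs_app_r : forall M N P, beta_step chi M N ->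
    beta_step chi (app P M) (app P N).

Definition beta_conv {V : VarType} {C : Type} (chi : list nat -> nat)
  : term V C -> term V C -> Prop :=
  clos_refl_sym_trans (term V C)
    (fun M N => alpha chi M N \/ beta_step chi M N).

Definition context (V : VarType) (C : Type) := list (V * term V C).

Definition dom {V : VarType} {C : Type} (G : context V C) : list V := map fst G.

Inductive wf {V : VarType} {C : Type} (chi : list nat -> nat)
  (Ax : C -> C -> Prop) (Rl : C -> C -> C -> Prop) : context V C -> Prop :=
| wf_nil : wf chi Ax Rl []
| wf_cons : forall G x A s,
    wf chi Ax Rl G -> typing chi Ax Rl G A (cst s) -> ~ In x (dom G) ->
    wf chi Ax Rl ((x, A) :: G)
with typing {V : VarType} {C : Type} (chi : list nat -> nat)
  (Ax : C -> C -> Prop) (Rl : C -> C -> C -> Prop)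
  : context V C -> term V C -> term V C -> Prop :=
| ty_sort : forall G s1 s2,
    wf chi Ax Rl G -> Ax s1 s2 -> typing chi Ax Rl G (cst s1) (cst s2)
| ty_var : forall G x A,
    wf chi Ax Rl G -> In (x, A) G -> typing chi Ax Rl G (var x) A
| ty_prod : forall G x A B s1 s2 s3,
    Rl s1 s2 s3 ->
    typing chi Ax Rl G A (cst s1) ->
    (forall y, ~ In y (dom G) ->
       typing chi Ax Rl ((y, A) :: G) (subst1 chi B x (var y)) (cst s2)) ->
    typing chi Ax Rl G (pi x A B) (cst s3)
| ty_abs : forall G x y A B M s1 s2 s3,
    Rl s1 s2 s3 ->
    typing chi Ax Rl G A (cst s1) ->
    (forall z, ~ In z (dom G) ->
       typing chi Ax Rl ((z, A) :: G) (subst1 chi B y (var z)) (cst s2)) ->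
    (forall z, ~ In z (dom G) ->
       typing chi Ax Rl ((z, A) :: G) (subst1 chi M x (var z))
         (subst1 chi B y (var z))) ->
    typing chi Ax Rl G (lam x A M) (pi y A B)
| ty_app : forall G M N x A B s,
    typing chi Ax Rl G M (pi x A B) ->
    typing chi Ax Rl G N A ->
    typing chi Ax Rl G (subst1 chi B x N) (cst s) ->
    typing chi Ax Rl G (app M N) (subst1 chi B x N)
| ty_conv : forall G M A B s,
    typing chi Ax Rl G M A -> beta_conv chi A B ->
    typing chi Ax Rl G B (cst s) ->
    typing chi Ax Rl G M B.

Definition wt_subst {V : VarType} {C : Type} (chi : list nat -> nat)
  (Ax : C -> C -> Prop) (Rl : C -> C -> C -> Prop)
  (sigma : subst_t V C) (G D : context V C) : Prop :=
  forall x A, In (x, A) G -> typing chi Ax Rl D (sigma x) (sapply chi A sigma).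

(* Main.v *)
Require Import Defs.
From Stdlib Require Import List Relations.
Import ListNotations.

Lemma vremove_In {V:VarType} (l : list V) x y : In y (vremove l x) <-> In y l /\ y <> x.
Proof. unfold vremove. rewrite filter_In. destruct (v_eq_dec V y x); intuition congruence. Qed.

Lemma vremove_app {V:VarType} (l1 l2 : list V) x : vremove (l1 ++ l2) x = vremove l1 x ++ vremove l2 x.
Proof. unfold vremove. apply filter_app. Qed.

Lemma vremove_cons {V:VarType} (l : list V) a x :
  vremove (a :: l) x = if v_eq_dec V a x then vremove l x else a :: vremove l x.
Proof. unfold vremove; simpl. destruct (v_eq_dec V a x); reflexivity. Qed.

Lemma vremove_notin {V:VarType} (l : list V) x : ~ In x l -> vremove l x = l.
Proof. induction l as [|a l IH]; intros H; auto.
  rewrite vremove_cons. destruct (v_eq_dec V a x). subst; exfalso; simpl in H; auto.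
  f_equal. apply IH. simpl in H; auto. Qed.

Lemma Xp_fresh {V:VarType} (chi : list nat -> nat) (Hchi : forall ns, ~ In (chi ns) ns) (l : list V) :
  ~ In (Xp chi l) l.
Proof. unfold Xp. intro H. apply (Hchi (map (v_encode V) l)).
  rewrite <- (v_encode_decode V (chi (map (v_encode V) l))). apply in_map. exact H. Qed.

Lemma Xs_fresh {V C} chi (Hchi : forall ns, ~ In (chi ns) ns) (s : subst_t V C) l v :
  In v l -> ~ In (Xs chi s l) (fv (s v)).
Proof. intros Hv H. apply (Xp_fresh chi Hchi (flat_map (fun y => fv (s y)) l)).
  unfold Xs in H. apply in_flat_map. eauto. Qed.

Lemma my_flat_map_ext_in {A B} (f g : A -> list B) l :
  (forall a, In a l -> f a = g a) -> flat_map f l = flat_map g l.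
Proof. induction l; simpl; intros H; auto. rewrite H by auto. f_equal. apply IHl; auto. Qed.

Lemma my_flat_map_app {A B} (f : A -> list B) l1 l2 :
  flat_map f (l1 ++ l2) = flat_map f l1 ++ flat_map f l2.
Proof. induction l1; simpl; auto. rewrite IHl1, app_assoc. auto. Qed.

Lemma my_flat_map_flat_map {A B D} (f : A -> list B) (g : B -> list D) l :
  flat_map g (flat_map f l) = flat_map (fun a => flat_map g (f a)) l.
Proof. induction l; simpl; auto. rewrite my_flat_map_app, IHl. auto. Qed.

Lemma flat_map_single {A} (l : list A) : flat_map (fun v => [v]) l = l.
Proof. induction l; simpl; auto. rewrite IHl; auto. Qed.

Lemma upd_eq {V C} (s : subst_t V C) x N : upd s x N x = N.
Proof. unfold upd. destruct (v_eq_dec V x x); congruence. Qed.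

Lemma upd_neq {V C} (s : subst_t V C) x N y : y <> x -> upd s x N y = s y.
Proof. unfold upd. destruct (v_eq_dec V y x); congruence. Qed.

Lemma vremove_flat_upd {V C} (s : subst_t V C) x y l :
  (forall v, In v l -> v <> x -> ~ In y (fv (s v))) ->
  vremove (flat_map (fun v => fv (upd s x (var y) v)) l) y
  = flat_map (fun v => fv (s v)) (vremove l x).
Proof.
  induction l as [|a l IH]; intros H; auto.
  cbn [flat_map]. rewrite vremove_app, vremove_cons. destruct (v_eq_dec V a x) as [e|n].
  - subst. rewrite upd_eq. cbn [fv]. rewrite vremove_cons.
    destruct (v_eq_dec V y y); [|congruence]. apply IH; simpl in *; auto.
  - rewrite upd_neq by auto. rewrite vremove_notin by (apply H; simpl; auto).
    cbn [flat_map]. f_equal. apply IH; simpl in *; auto.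
Qed.

Definition fresh_for {V C} (s : subst_t V C) (l : list V) y :=
  forall v, In v l -> ~ In y (fv (s v)).

Lemma Xs_fresh_for {V C} chi (Hchi : forall ns, ~ In (chi ns) ns) (s : subst_t V C) l :
  fresh_for s l (Xs chi s l).
Proof. intros v Hv. apply Xs_fresh; auto. Qed.

Lemma vremove_flat_upd' {V C} (s : subst_t V C) x y l :
  fresh_for s (vremove l x) y ->
  vremove (flat_map (fun v => fv (upd s x (var y) v)) l) y
  = flat_map (fun v => fv (s v)) (vremove l x).
Proof. intros H. apply vremove_flat_upd. intros v Hv Hne. apply H. apply vremove_In; auto. Qed.

Lemma fv_sapply {V C} chi (Hchi : forall ns, ~ In (chi ns) ns) (M : term V C) :
  forall s, fv (sapply chi M s) = flat_map (fun v => fv (s v)) (fv M).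
Proof.
  induction M as [k|x|x A IHA M IHM|x A IHA M IHM|M IHM N IHN]; intros s; simpl.
  - auto.
  - rewrite app_nil_r; auto.
  - rewrite my_flat_map_app, IHA, IHM. f_equal. apply vremove_flat_upd'.
    apply Xs_fresh_for; auto.
  - rewrite my_flat_map_app, IHA, IHM. f_equal. apply vremove_flat_upd'.
    apply Xs_fresh_for; auto.
  - rewrite my_flat_map_app, IHM, IHN. auto.
Qed.

Lemma fv_body {V C} chi (Hchi : forall ns, ~ In (chi ns) ns) (s : subst_t V C) M x y :
  fresh_for s (vremove (fv M) x) y ->
  vremove (fv (sapply chi M (upd s x (var y)))) y = flat_map (fun v => fv (s v)) (vremove (fv M) x).
Proof. intros H. rewrite fv_sapply by auto. apply vremove_flat_upd'; auto. Qed.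

Lemma sapply_agree {V C} chi (M : term V C) :
  forall s s', (forall v, In v (fv M) -> s v = s' v) -> sapply chi M s = sapply chi M s'.
Proof.
  induction M as [k|x|x A IHA M IHM|x A IHA M IHM|M IHM N IHN]; intros s s' H; simpl in *.
  - auto.
  - auto.
  - assert (Hy : Xs chi s (vremove (fv M) x) = Xs chi s' (vremove (fv M) x)).
    { unfold Xs. f_equal. apply my_flat_map_ext_in. intros v Hv. rewrite H; auto.
      apply in_or_app; auto. }
    rewrite Hy, (IHA s s') by (intros; apply H; apply in_or_app; auto).
    f_equal. apply IHM. intros v Hv. unfold upd. destruct (v_eq_dec V v x); auto.
    apply H. apply in_or_app; right. apply vremove_In; auto.
  - assert (Hy : Xs chi s (vremove (fv M) x) = Xs chi s' (vremove (fv M) x)).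
    { unfold Xs. f_equal. apply my_flat_map_ext_in. intros v Hv. rewrite H; auto.
      apply in_or_app; auto. }
    rewrite Hy, (IHA s s') by (intros; apply H; apply in_or_app; auto).
    f_equal. apply IHM. intros v Hv. unfold upd. destruct (v_eq_dec V v x); auto.
    apply H. apply in_or_app; right. apply vremove_In; auto.
  - rewrite (IHM s s'), (IHN s s'); auto; intros; apply H; apply in_or_app; auto.
Qed.

Definition comp {V C} chi (s t : subst_t V C) : subst_t V C := fun v => sapply chi (s v) t.

Lemma Xs_comp {V C} chi (Hchi : forall ns, ~ In (chi ns) ns) (s t : subst_t V C) M x y :
  fresh_for s (vremove (fv M) x) y ->
  Xs chi t (vremove (fv (sapply chi M (upd s x (var y)))) y) = Xs chi (comp chi s t) (vremove (fv M) x).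
Proof.
  intros H. unfold Xs. rewrite fv_body by auto. rewrite my_flat_map_flat_map. f_equal.
  apply my_flat_map_ext_in. intros v _. unfold comp. rewrite fv_sapply by auto. auto.
Qed.

Lemma sapply_comp {V C} chi (Hchi : forall ns, ~ In (chi ns) ns) (M : term V C) :
  forall s t, sapply chi (sapply chi M s) t = sapply chi M (comp chi s t).
Proof.
  induction M as [k|x|x A IHA M IHM|x A IHA M IHM|M IHM N IHN]; intros s t.
  - auto.
  - auto.
  - cbn [sapply]. rewrite IHA. rewrite Xs_comp by (auto; apply Xs_fresh_for; auto).
    f_equal. rewrite IHM. apply sapply_agree. intros v Hv. unfold comp at 1.
    destruct (v_eq_dec V v x) as [e|n].
    + subst. rewrite !upd_eq. simpl. apply upd_eq.
    + rewrite !upd_neq by auto. unfold comp. apply sapply_agree. intros u Hu.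
      rewrite upd_neq; auto. intro e; subst.
      eapply (Xs_fresh chi Hchi s (vremove (fv M) x) v); [apply vremove_In; auto| exact Hu].
  - cbn [sapply]. rewrite IHA. rewrite Xs_comp by (auto; apply Xs_fresh_for; auto).
    f_equal. rewrite IHM. apply sapply_agree. intros v Hv. unfold comp at 1.
    destruct (v_eq_dec V v x) as [e|n].
    + subst. rewrite !upd_eq. simpl. apply upd_eq.
    + rewrite !upd_neq by auto. unfold comp. apply sapply_agree. intros u Hu.
      rewrite upd_neq; auto. intro e; subst.
      eapply (Xs_fresh chi Hchi s (vremove (fv M) x) v); [apply vremove_In; auto| exact Hu].
  - simpl. rewrite IHM, IHN. auto.
Qed.

Lemma sapply_iota_var {V : VarType} {C : Type} chi (v : V) : sapply chi (@var V C v) iota = var v.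
Proof. reflexivity. Qed.

Lemma rename_lemma {V : VarType} {C : Type} chi (Hchi : forall ns, ~ In (chi ns) ns) (M : term V C) x y s N :
  ~ In y (vremove (fv M) x) ->
  sapply chi (subst1 chi M x (var y)) (upd s y N) = sapply chi M (upd s x N).
Proof.
  intros H. unfold subst1. rewrite sapply_comp by auto. apply sapply_agree.
  intros v Hv. unfold comp. destruct (v_eq_dec V v x) as [e|n].
  - subst. rewrite !upd_eq. simpl. apply upd_eq.
  - rewrite !upd_neq by auto. unfold iota. simpl. apply upd_neq.
    intro e; subst. apply H. apply vremove_In; auto.
Qed.

Lemma Xs_iota {V : VarType} {C : Type} chi (l : list V) : Xs chi (@iota V C) l = Xp chi l.
Proof. unfold Xs. f_equal. apply flat_map_single. Qed.

Lemma alpha_iota {V : VarType} {C : Type} chi (Hchi : forall ns, ~ In (chi ns) ns) (M : term V C) :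
  alpha chi (sapply chi M iota) M.
Proof.
  induction M as [k|x|x A IHA M IHM|x A IHA M IHM|M IHM N IHN].
  - constructor.
  - constructor.
  - cbn [sapply]. set (y := Xs chi iota (vremove (fv M) x)).
    set (w := Xp chi (fv (sapply chi M (upd iota x (var y))) ++ fv M)).
    assert (Hw : ~ In w (fv (sapply chi M (upd iota x (var y))) ++ fv M)) by apply Xp_fresh, Hchi.
    apply alpha_lam with (y := w); auto.
    + rewrite vremove_In. intros [h _]. apply Hw; apply in_or_app; auto.
    + rewrite vremove_In. intros [h _]. apply Hw; apply in_or_app; auto.
    + unfold subst1 at 1. rewrite sapply_comp by auto. apply sapply_agree.
      intros v Hv. unfold comp. destruct (v_eq_dec V v x) as [e|n].
      * subst. rewrite !upd_eq. simpl. apply upd_eq.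
      * rewrite !upd_neq by auto. unfold iota at 1. simpl. apply upd_neq.
        intro e. assert (Hf := Xs_fresh chi Hchi (@iota V C) (vremove (fv M) x) v).
        fold y in Hf. apply Hf. apply vremove_In; auto. rewrite e. simpl; auto.
  - cbn [sapply]. set (y := Xs chi iota (vremove (fv M) x)).
    set (w := Xp chi (fv (sapply chi M (upd iota x (var y))) ++ fv M)).
    assert (Hw : ~ In w (fv (sapply chi M (upd iota x (var y))) ++ fv M)) by apply Xp_fresh, Hchi.
    apply alpha_pi with (y := w); auto.
    + rewrite vremove_In. intros [h _]. apply Hw; apply in_or_app; auto.
    + rewrite vremove_In. intros [h _]. apply Hw; apply in_or_app; auto.
    + unfold subst1 at 1. rewrite sapply_comp by auto. apply sapply_agree.
      intros v Hv. unfold comp. destruct (v_eq_dec V v x) as [e|n].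
      * subst. rewrite !upd_eq. simpl. apply upd_eq.
      * rewrite !upd_neq by auto. unfold iota at 1. simpl. apply upd_neq.
        intro e. assert (Hf := Xs_fresh chi Hchi (@iota V C) (vremove (fv M) x) v).
        fold y in Hf. apply Hf. apply vremove_In; auto. rewrite e. simpl; auto.
  - simpl. constructor; auto.
Qed.

Lemma alpha_refl {V : VarType} {C : Type} chi (Hchi : forall ns, ~ In (chi ns) ns) (M : term V C) : alpha chi M M.
Proof.
  induction M as [k|x|x A IHA M IHM|x A IHA M IHM|M IHM N IHN].
  - constructor.
  - constructor.
  - apply alpha_lam with (y := Xp chi (fv M)); auto;
    rewrite vremove_In; intros [h _]; eapply Xp_fresh; eauto.
  - apply alpha_pi with (y := Xp chi (fv M)); auto;
    rewrite vremove_In; intros [h _]; eapply Xp_fresh; eauto.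
  - constructor; auto.
Qed.

Lemma subst_var_fv {V : VarType} {C : Type} chi (Hchi : forall ns, ~ In (chi ns) ns) (M : term V C) x y :
  ~ In y (vremove (fv M) x) -> vremove (fv (subst1 chi M x (var y))) y = vremove (fv M) x.
Proof.
  intros H. unfold subst1. rewrite fv_body.
  - apply flat_map_single.
  - auto.
  - intros v Hv. unfold iota; simpl. intros [e|[]]. subst; auto.
Qed.

Lemma alpha_sound {V : VarType} {C : Type} chi (Hchi : forall ns, ~ In (chi ns) ns) (M N : term V C) :
  alpha chi M N -> fv M = fv N /\ forall s, sapply chi M s = sapply chi N s.
Proof.
  induction 1 as [k|x|M N M' N' _ [IH1 IH1'] _ [IH2 IH2']
                  |x A M x' A' M' y _ [IHA IHA'] H1 H2 He|x A M x' A' M' y _ [IHA IHA'] H1 H2 He].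
  - split; auto.
  - split; auto.
  - simpl. rewrite IH1, IH2. split; auto. intros s; rewrite IH1', IH2'; auto.
  - assert (Hf : vremove (fv M) x = vremove (fv M') x').
    { rewrite <- (subst_var_fv chi Hchi M x y H1), <- (subst_var_fv chi Hchi M' x' y H2), He. auto. }
    cbn [fv]. rewrite IHA, Hf. split; auto. intros s. cbn [sapply]. rewrite Hf, IHA'. f_equal.
    rewrite <- (rename_lemma chi Hchi M x y) by auto.
    rewrite <- (rename_lemma chi Hchi M' x' y) by auto. rewrite He. auto.
  - assert (Hf : vremove (fv M) x = vremove (fv M') x').
    { rewrite <- (subst_var_fv chi Hchi M x y H1), <- (subst_var_fv chi Hchi M' x' y H2), He. auto. }
    cbn [fv]. rewrite IHA, Hf. split; auto. intros s. cbn [sapply]. rewrite Hf, IHA'. f_equal.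
    rewrite <- (rename_lemma chi Hchi M x y) by auto.
    rewrite <- (rename_lemma chi Hchi M' x' y) by auto. rewrite He. auto.
Qed.

Lemma iota_idem {V : VarType} {C : Type} chi (Hchi : forall ns, ~ In (chi ns) ns) (M : term V C) :
  sapply chi (sapply chi M iota) iota = sapply chi M iota.
Proof. apply (alpha_sound chi Hchi _ _ (alpha_iota chi Hchi M)). Qed.

Lemma ieq_conv {V : VarType} {C : Type} chi (Hchi : forall ns, ~ In (chi ns) ns) (M N : term V C) :
  sapply chi M iota = sapply chi N iota -> beta_conv chi M N.
Proof.
  intros H. apply rst_trans with (sapply chi M iota).
  - apply rst_sym, rst_step. left. apply alpha_iota; auto.
  - rewrite H. apply rst_step. left. apply alpha_iota; auto.
Qed.

Lemma K1 {V : VarType} {C : Type} chi (Hchi : forall ns, ~ In (chi ns) ns) (B N : term V C) x s :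
  sapply chi (sapply chi (subst1 chi B x N) s) iota
  = sapply chi B (upd (comp chi s iota) x (sapply chi (sapply chi N s) iota)).
Proof.
  unfold subst1. rewrite !sapply_comp by auto. apply sapply_agree. intros v Hv.
  unfold comp. destruct (v_eq_dec V v x) as [e|n].
  - subst. rewrite !upd_eq. auto.
  - rewrite !upd_neq by auto. reflexivity.
Qed.

Lemma K2 {V : VarType} {C : Type} chi (Hchi : forall ns, ~ In (chi ns) ns) (B N : term V C) x y s :
  fresh_for s (vremove (fv B) x) y ->
  sapply chi (subst1 chi (sapply chi B (upd s x (var y))) y N) iota
  = sapply chi B (upd (comp chi s iota) x (sapply chi N iota)).
Proof.
  intros Hf. unfold subst1. rewrite !sapply_comp by auto. apply sapply_agree. intros v Hv.
  unfold comp. destruct (v_eq_dec V v x) as [e|n].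
  - subst. rewrite !upd_eq. simpl. rewrite upd_eq. auto.
  - rewrite !upd_neq by auto.
    apply sapply_agree. intros u Hu. rewrite upd_neq. reflexivity. intro e; subst.
    apply (Hf v); auto. apply vremove_In; auto.
Qed.

Lemma lamren {V : VarType} {C : Type} chi (Hchi : forall ns, ~ In (chi ns) ns) (A M : term V C) x y s :
  fresh_for s (vremove (fv M) x) y ->
  sapply chi (lam y (sapply chi A s) (sapply chi M (upd s x (var y)))) iota
  = sapply chi (lam x A M) (comp chi s iota).
Proof.
  intros Hf. cbn [sapply]. rewrite Xs_comp by auto. f_equal.
  - apply sapply_comp; auto.
  - rewrite sapply_comp by auto. apply sapply_agree. intros v Hv.
    unfold comp at 1. destruct (v_eq_dec V v x) as [e|n].
    + subst. rewrite !upd_eq. simpl. apply upd_eq.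
    + rewrite !upd_neq by auto. unfold comp. apply sapply_agree. intros u Hu.
      apply upd_neq. intro e; subst. apply (Hf v); auto. apply vremove_In; auto.
Qed.

Lemma piren {V : VarType} {C : Type} chi (Hchi : forall ns, ~ In (chi ns) ns) (A M : term V C) x y s :
  fresh_for s (vremove (fv M) x) y ->
  sapply chi (pi y (sapply chi A s) (sapply chi M (upd s x (var y)))) iota
  = sapply chi (pi x A M) (comp chi s iota).
Proof.
  intros Hf. cbn [sapply]. rewrite Xs_comp by auto. f_equal.
  - apply sapply_comp; auto.
  - rewrite sapply_comp by auto. apply sapply_agree. intros v Hv.
    unfold comp at 1. destruct (v_eq_dec V v x) as [e|n].
    + subst. rewrite !upd_eq. simpl. apply upd_eq.
    + rewrite !upd_neq by auto. unfold comp. apply sapply_agree. intros u Hu.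
      apply upd_neq. intro e; subst. apply (Hf v); auto. apply vremove_In; auto.
Qed.

Lemma vremove_incl {V : VarType} (l1 l2 : list V) x : incl l1 l2 -> incl (vremove l1 x) (vremove l2 x).
Proof. intros H v. rewrite !vremove_In. intros [h1 h2]; auto. Qed.

Lemma fv_step {V : VarType} {C : Type} chi (Hchi : forall ns, ~ In (chi ns) ns) (M N : term V C) :
  beta_step chi M N -> incl (fv N) (fv M).
Proof.
  induction 1 as [M N Hc| | | | | |]; cbn [fv].
  - destruct Hc as [x A M N]. unfold subst1. rewrite fv_sapply by auto.
    intros u Hu. apply in_flat_map in Hu. destruct Hu as [v [Hv Hu]].
    destruct (v_eq_dec V v x) as [e|n].
    + subst. rewrite upd_eq in Hu. cbn [fv]. apply in_or_app; right; auto.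
    + rewrite upd_neq in Hu by auto. unfold iota in Hu. simpl in Hu. destruct Hu as [e|[]]; subst.
      cbn [fv]. apply in_or_app; left. apply in_or_app; right. apply vremove_In; auto.
  - apply incl_app; [apply incl_appl, incl_refl| apply incl_appr, vremove_incl; auto].
  - apply incl_app; [apply incl_appl, incl_refl| apply incl_appr, vremove_incl; auto].
  - apply incl_app; [apply incl_appl; auto| apply incl_appr, incl_refl].
  - apply incl_app; [apply incl_appl; auto| apply incl_appr, incl_refl].
  - apply incl_app; [apply incl_appl; auto| apply incl_appr, incl_refl].
  - apply incl_app; [apply incl_appl, incl_refl| apply incl_appr; auto].
Qed.

Lemma bconv_cong {V : VarType} {C : Type} chi (F : term V C -> term V C) (P Q : term V C) :
  (forall P Q, alpha chi P Q -> alpha chi (F P) (F Q)) ->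
  (forall P Q, beta_step chi P Q -> beta_step chi (F P) (F Q)) ->
  beta_conv chi P Q -> beta_conv chi (F P) (F Q).
Proof.
  intros Ha Hb H. induction H as [P Q [h|h]| | |].
  - apply rst_step; left; auto.
  - apply rst_step; right; auto.
  - apply rst_refl.
  - apply rst_sym; auto.
  - eapply rst_trans; eauto.
Qed.

Lemma bconv_lam_body {V : VarType} {C : Type} chi (Hchi : forall ns, ~ In (chi ns) ns) y (T P Q : term V C) :
  beta_conv chi P Q -> beta_conv chi (lam y T P) (lam y T Q).
Proof.
  apply (bconv_cong chi (fun P => lam y T P)).
  - intros P0 Q0 H. apply alpha_lam with (y := Xp chi (fv P0 ++ fv Q0)).
    + apply alpha_refl; auto.
    + rewrite vremove_In; intros [h _]; eapply Xp_fresh; eauto; apply in_or_app; eauto.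
    + rewrite vremove_In; intros [h _]; eapply Xp_fresh; eauto; apply in_or_app; eauto.
    + unfold subst1. apply (alpha_sound chi Hchi _ _ H).
  - intros; apply bs_lam_body; auto.
Qed.

Lemma bconv_pi_body {V : VarType} {C : Type} chi (Hchi : forall ns, ~ In (chi ns) ns) y (T P Q : term V C) :
  beta_conv chi P Q -> beta_conv chi (pi y T P) (pi y T Q).
Proof.
  apply (bconv_cong chi (fun P => pi y T P)).
  - intros P0 Q0 H. apply alpha_pi with (y := Xp chi (fv P0 ++ fv Q0)).
    + apply alpha_refl; auto.
    + rewrite vremove_In; intros [h _]; eapply Xp_fresh; eauto; apply in_or_app; eauto.
    + rewrite vremove_In; intros [h _]; eapply Xp_fresh; eauto; apply in_or_app; eauto.
    + unfold subst1. apply (alpha_sound chi Hchi _ _ H).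
  - intros; apply bs_pi_body; auto.
Qed.

Lemma bconv_lam_dom {V : VarType} {C : Type} chi (Hchi : forall ns, ~ In (chi ns) ns) y (R P Q : term V C) :
  beta_conv chi P Q -> beta_conv chi (lam y P R) (lam y Q R).
Proof.
  apply (bconv_cong chi (fun P => lam y P R)).
  - intros P0 Q0 H. apply alpha_lam with (y := Xp chi (fv R)); auto;
    rewrite vremove_In; intros [h _]; eapply Xp_fresh; eauto.
  - intros; apply bs_lam_dom; auto.
Qed.

Lemma bconv_pi_dom {V : VarType} {C : Type} chi (Hchi : forall ns, ~ In (chi ns) ns) y (R P Q : term V C) :
  beta_conv chi P Q -> beta_conv chi (pi y P R) (pi y Q R).
Proof.
  apply (bconv_cong chi (fun P => pi y P R)).
  - intros P0 Q0 H. apply alpha_pi with (y := Xp chi (fv R)); auto;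
    rewrite vremove_In; intros [h _]; eapply Xp_fresh; eauto.
  - intros; apply bs_pi_dom; auto.
Qed.

Lemma bconv_app_l {V : VarType} {C : Type} chi (Hchi : forall ns, ~ In (chi ns) ns) (R P Q : term V C) :
  beta_conv chi P Q -> beta_conv chi (Defs.app P R) (Defs.app Q R).
Proof.
  apply (bconv_cong chi (fun P => Defs.app P R)).
  - intros. constructor; auto. apply alpha_refl; auto.
  - intros; apply bs_app_l; auto.
Qed.

Lemma bconv_app_r {V : VarType} {C : Type} chi (Hchi : forall ns, ~ In (chi ns) ns) (R P Q : term V C) :
  beta_conv chi P Q -> beta_conv chi (Defs.app R P) (Defs.app R Q).
Proof.
  apply (bconv_cong chi (fun P => Defs.app R P)).
  - intros. constructor; auto. apply alpha_refl; auto.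
  - intros; apply bs_app_r; auto.
Qed.

Lemma fresh_for_incl {V : VarType} {C : Type} (s : subst_t V C) l1 l2 y :
  incl l1 l2 -> fresh_for s l2 y -> fresh_for s l1 y.
Proof. intros H1 H2 v Hv. apply H2; auto. Qed.

Lemma bstep_subst {V : VarType} {C : Type} chi (Hchi : forall ns, ~ In (chi ns) ns) (M N : term V C) :
  beta_step chi M N -> forall s, beta_conv chi (sapply chi M s) (sapply chi N s).
Proof.
  induction 1 as [M N Hc|x A M M' H IH|x A M M' H IH|x A A' M H IH|x A A' M H IH|M N P H IH|M N P H IH];
    intros s.
  - destruct Hc as [x A M N]. cbn [sapply].
    set (y := Xs chi s (vremove (fv M) x)).
    apply rst_trans with (subst1 chi (sapply chi M (upd s x (var y))) y (sapply chi N s)).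
    + apply rst_step; right. apply bs_contr. apply beta_redex.
    + apply ieq_conv; auto. rewrite K2 by (auto; apply Xs_fresh_for; auto).
      rewrite K1 by auto. auto.
  - cbn [sapply]. set (y := Xs chi s (vremove (fv M) x)).
    apply rst_trans with (lam y (sapply chi A s) (sapply chi M' (upd s x (var y)))).
    + apply bconv_lam_body; auto.
    + apply ieq_conv; auto. rewrite lamren.
      * change (lam (Xs chi s (vremove (fv M') x)) (sapply chi A s)
           (sapply chi M' (upd s x (var (Xs chi s (vremove (fv M') x))))))
          with (sapply chi (lam x A M') s).
        rewrite sapply_comp; auto.
      * auto.
      * eapply fresh_for_incl; [apply vremove_incl, (fv_step chi Hchi _ _ H)|].
        apply Xs_fresh_for; auto.
  - cbn [sapply]. set (y := Xs chi s (vremove (fv M) x)).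
    apply rst_trans with (pi y (sapply chi A s) (sapply chi M' (upd s x (var y)))).
    + apply bconv_pi_body; auto.
    + apply ieq_conv; auto. rewrite piren.
      * change (pi (Xs chi s (vremove (fv M') x)) (sapply chi A s)
           (sapply chi M' (upd s x (var (Xs chi s (vremove (fv M') x))))))
          with (sapply chi (pi x A M') s).
        rewrite sapply_comp; auto.
      * auto.
      * eapply fresh_for_incl; [apply vremove_incl, (fv_step chi Hchi _ _ H)|].
        apply Xs_fresh_for; auto.
  - cbn [sapply]. apply bconv_lam_dom; auto.
  - cbn [sapply]. apply bconv_pi_dom; auto.
  - cbn [sapply]. apply bconv_app_l; auto.
  - cbn [sapply]. apply bconv_app_r; auto.
Qed.

Lemma bconv_subst {V : VarType} {C : Type} chi (Hchi : forall ns, ~ In (chi ns) ns) (M N : term V C) s :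
  beta_conv chi M N -> beta_conv chi (sapply chi M s) (sapply chi N s).
Proof.
  induction 1 as [P Q [h|h]| | |].
  - rewrite (proj2 (alpha_sound chi Hchi _ _ h) s). apply rst_refl.
  - apply bstep_subst; auto.
  - apply rst_refl.
  - apply rst_sym; auto.
  - eapply rst_trans; eauto.
Qed.

Lemma typing_wf {V : VarType} {C : Type} chi Ax Rl (G : context V C) M A :
  typing chi Ax Rl G M A -> wf chi Ax Rl G.
Proof. induction 1; auto. Qed.

Lemma incl_dom {V : VarType} {C : Type} (G G' : context V C) : incl G G' -> incl (dom G) (dom G').
Proof. intros H. apply incl_map; auto. Qed.

Lemma weaken {V : VarType} {C : Type} chi Ax Rl (G : context V C) M A :
  typing chi Ax Rl G M A -> forall G', incl G G' -> wf chi Ax Rl G' -> typing chi Ax Rl G' M A.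
Proof.
  induction 1 as [G s1 s2 Hw Ha|G x A Hw Hi|G x A B s1 s2 s3 HR HA IHA HB IHB
                 |G x y A B M s1 s2 s3 HR HA IHA HB IHB HM IHM|G M N x A B s HM IHM HN IHN HB IHB
                 |G M A B s HM IHM Hc HB IHB]; intros G' Hi' Hw'.
  - constructor; auto.
  - constructor; auto.
  - apply ty_prod with s1 s2; auto. intros y Hy.
    assert (Hy' : ~ In y (dom G)) by (intro h; apply Hy, (incl_dom _ _ Hi'); auto).
    apply IHB; auto.
    + apply incl_cons; [left; auto| apply incl_tl; auto].
    + econstructor; eauto.
  - apply ty_abs with s1 s2 s3; auto.
    + intros z Hz.
      assert (Hz' : ~ In z (dom G)) by (intro h; apply Hz, (incl_dom _ _ Hi'); auto).
      apply IHB; auto.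
      * apply incl_cons; [left; auto| apply incl_tl; auto].
      * econstructor; eauto.
    + intros z Hz.
      assert (Hz' : ~ In z (dom G)) by (intro h; apply Hz, (incl_dom _ _ Hi'); auto).
      apply IHM; auto.
      * apply incl_cons; [left; auto| apply incl_tl; auto].
      * econstructor; eauto.
  - eapply ty_app; eauto.
  - eapply ty_conv; eauto.
Qed.

Lemma genweak {V : VarType} {C : Type} chi Ax Rl (G : context V C) M A :
  typing chi Ax Rl G M A -> forall G',
  (forall v T, In (v, T) G -> typing chi Ax Rl G' (var v) T) ->
  incl (dom G) (dom G') -> wf chi Ax Rl G' -> typing chi Ax Rl G' M A.
Proof.
  induction 1 as [G s1 s2 Hw Ha|G x A Hw Hi|G x A B s1 s2 s3 HR HA IHA HB IHB
                 |G x y A B M s1 s2 s3 HR HA IHA HB IHB HM IHM|G M N x A B s HM IHM HN IHN HB IHB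
                 |G M A B s HM IHM Hc HB IHB]; intros G' Hv Hi' Hw'.
  - constructor; auto.
  - auto.
  - apply ty_prod with s1 s2; auto. intros y Hy.
    assert (Hy' : ~ In y (dom G)) by (intro h; apply Hy, Hi'; auto).
    assert (Hw2 : wf chi Ax Rl ((y, A) :: G')) by (econstructor; eauto).
    apply IHB; auto.
    + intros v T [e|h].
      * inversion e; subst. constructor; auto. left; auto.
      * apply weaken with G'; auto. apply incl_tl, incl_refl.
    + simpl. apply incl_cons; [left; auto| apply incl_tl; auto].
  - assert (Hgen : forall z, ~ In z (dom G') ->
        ~ In z (dom G) /\ wf chi Ax Rl ((z, A) :: G') /\
        (forall v T, In (v, T) ((z, A) :: G) -> typing chi Ax Rl ((z, A) :: G') (var v) T) /\
        incl (dom ((z, A) :: G)) (dom ((z, A) :: G'))).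
    { intros z Hz.
      assert (Hz' : ~ In z (dom G)) by (intro h; apply Hz, Hi'; auto).
      assert (Hw2 : wf chi Ax Rl ((z, A) :: G')) by (econstructor; eauto).
      split; [auto| split; [auto| split]].
      - intros v T [e|h].
        + inversion e; subst. constructor; auto. left; auto.
        + apply weaken with G'; auto. apply incl_tl, incl_refl.
      - simpl. apply incl_cons; [left; auto| apply incl_tl; auto]. }
    apply ty_abs with s1 s2 s3; auto.
    + intros z Hz. destruct (Hgen z Hz) as (h1 & h2 & h3 & h4). apply IHB; auto.
    + intros z Hz. destruct (Hgen z Hz) as (h1 & h2 & h3 & h4). apply IHM; auto.
  - eapply ty_app; eauto.
  - eapply ty_conv; eauto.
Qed.

Lemma ctxconv {V : VarType} {C : Type} chi Ax Rl (G : context V C) z A A' s s' P T :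
  wf chi Ax Rl G -> typing chi Ax Rl G A (cst s) -> typing chi Ax Rl G A' (cst s') ->
  beta_conv chi A' A -> ~ In z (dom G) ->
  typing chi Ax Rl ((z, A) :: G) P T -> typing chi Ax Rl ((z, A') :: G) P T.
Proof.
  intros Hw HA HA' Hc Hz H.
  assert (Hw2 : wf chi Ax Rl ((z, A') :: G)) by (econstructor; eauto).
  apply genweak with ((z, A) :: G); auto.
  - intros v U [e|h].
    + inversion e; subst. apply ty_conv with A' s; auto.
      * constructor; auto. left; auto.
      * apply weaken with G; auto. apply incl_tl, incl_refl.
    + constructor; auto. right; auto.
  - apply incl_refl.
Qed.

Lemma Xs_iota_fresh {V : VarType} {C : Type} chi (Hchi : forall ns, ~ In (chi ns) ns) (l : list V) :
  ~ In (Xs chi (@iota V C) l) l.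
Proof. rewrite Xs_iota. apply Xp_fresh; auto. Qed.

Lemma body_eq {V : VarType} {C : Type} chi (Hchi : forall ns, ~ In (chi ns) ns) (B B' : term V C) x x' z :
  sapply chi B (upd iota x (var (Xs chi (@iota V C) (vremove (fv B) x)))) =
  sapply chi B' (upd iota x' (var (Xs chi (@iota V C) (vremove (fv B') x')))) ->
  Xs chi (@iota V C) (vremove (fv B) x) = Xs chi (@iota V C) (vremove (fv B') x') ->
  subst1 chi B x (var z) = subst1 chi B' x' (var z).
Proof.
  intros H Hy.
  set (y := Xs chi (@iota V C) (vremove (fv B) x)) in *.
  set (y' := Xs chi (@iota V C) (vremove (fv B') x')) in *.
  transitivity (sapply chi (subst1 chi B x (var y)) (upd iota y (var z))).
  { symmetry. apply rename_lemma; auto. apply Xs_iota_fresh; auto. }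
  unfold subst1 at 1. rewrite H, Hy. fold (subst1 chi B' x' (var y')).
  apply rename_lemma; auto. apply Xs_iota_fresh; auto.
Qed.

Lemma subj_alpha {V : VarType} {C : Type} chi (Hchi : forall ns, ~ In (chi ns) ns) Ax Rl
  (G : context V C) M A :
  typing chi Ax Rl G M A -> forall N, sapply chi M iota = sapply chi N iota -> typing chi Ax Rl G N A.
Proof.
  induction 1 as [G s1 s2 Hw Ha|G x A Hw Hi|G x A B s1 s2 s3 HR HA IHA HB IHB
                 |G x y A B M s1 s2 s3 HR HA IHA HB IHB HM IHM|G M N x A B s HM IHM HN IHN HB IHB
                 |G M A B s HM IHM Hc HB IHB]; intros N0 HN0.
  - destruct N0; cbn [sapply] in HN0; unfold iota in HN0; try discriminate.
    injection HN0; intros; subst. constructor; auto.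
  - destruct N0; cbn [sapply] in HN0; unfold iota in HN0; try discriminate.
    injection HN0; intros; subst. constructor; auto.
  - destruct N0 as [| |x' A' B'|x' A' B'|]; cbn [sapply] in HN0; unfold iota in HN0; try discriminate.
    injection HN0; intros HB' HA' Hy. fold (@iota V C) in *.
    assert (HGw := typing_wf _ _ _ _ _ _ HA).
    assert (HtA' : typing chi Ax Rl G A' (cst s1)) by (apply IHA; auto).
    apply ty_prod with s1 s2; auto. intros z Hz.
    rewrite <- (body_eq chi Hchi B B' x x' z HB' Hy).
    apply ctxconv with A s1 s1; auto. apply ieq_conv; auto.
  - destruct N0 as [| |x' A' M'|x' A' M'|]; cbn [sapply] in HN0; unfold iota in HN0; try discriminate.
    injection HN0; intros HM' HA' Hx. fold (@iota V C) in *.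
    assert (HGw := typing_wf _ _ _ _ _ _ HA).
    assert (HtA' : typing chi Ax Rl G A' (cst s1)) by (apply IHA; auto).
    apply ty_conv with (pi y A' B) s3.
    + apply ty_abs with s1 s2 s3; auto.
      * intros z Hz. apply ctxconv with A s1 s1; auto. apply ieq_conv; auto.
      * intros z Hz. rewrite <- (body_eq chi Hchi M M' x x' z HM' Hx).
        apply ctxconv with A s1 s1; auto. apply ieq_conv; auto.
    + apply ieq_conv; auto. cbn [sapply]. rewrite HA'. auto.
    + apply ty_prod with s1 s2; auto.
  - destruct N0 as [| | | |M' N']; cbn [sapply] in HN0; unfold iota in HN0; try discriminate.
    injection HN0; intros HN' HM'. fold (@iota V C) in *.
    assert (Heq : sapply chi (subst1 chi B x N) iota = sapply chi (subst1 chi B x N') iota).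
    { unfold subst1. rewrite !sapply_comp by auto. apply sapply_agree. intros v Hv.
      unfold comp. destruct (v_eq_dec V v x) as [e|n].
      - subst. rewrite !upd_eq. auto.
      - rewrite !upd_neq by auto. auto. }
    apply ty_conv with (subst1 chi B x N') s.
    + eapply ty_app; eauto.
    + apply ieq_conv; auto.
    + auto.
  - eapply ty_conv; eauto.
Qed.

Lemma wt_ext {V : VarType} {C : Type} chi Ax Rl (s : subst_t V C) G D A w z s1 :
  wt_subst chi Ax Rl s G D -> wf chi Ax Rl D -> typing chi Ax Rl D (sapply chi A s) (cst s1) ->
  ~ In w (dom G) -> ~ In w (fv A) -> (forall v T, In (v, T) G -> ~ In w (fv T)) ->
  ~ In z (dom D) ->
  wt_subst chi Ax Rl (upd s w (var z)) ((w, A) :: G) ((z, sapply chi A s) :: D) /\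
  wf chi Ax Rl ((z, sapply chi A s) :: D).
Proof.
  intros Hwt HwD HA Hw1 Hw2 Hw3 Hz.
  assert (Hw : wf chi Ax Rl ((z, sapply chi A s) :: D)) by (econstructor; eauto).
  split; auto. intros v T [e|h].
  - inversion e; subst. rewrite upd_eq.
    rewrite (sapply_agree chi T (upd s v (var z)) s).
    + constructor; auto. left; auto.
    + intros u Hu. apply upd_neq. intro e'; subst; auto.
  - assert (Hv : v <> w).
    { intro e; subst. apply Hw1. apply in_map_iff. exists (w, T); auto. }
    rewrite upd_neq by auto.
    rewrite (sapply_agree chi T (upd s w (var z)) s).
    + apply weaken with D; auto. apply incl_tl, incl_refl.
    + intros u Hu. apply upd_neq. intro e'; subst. eapply Hw3; eauto.
Qed.

Lemma ieq_body {V : VarType} {C : Type} chi (Hchi : forall ns, ~ In (chi ns) ns) (B : term V C) x w z s :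
  ~ In w (vremove (fv B) x) ->
  sapply chi (sapply chi (subst1 chi B x (var w)) (upd s w (var z))) iota =
  sapply chi (subst1 chi (sapply chi B (upd s x (var (Xs chi s (vremove (fv B) x)))))
                 (Xs chi s (vremove (fv B) x)) (var z)) iota.
Proof.
  intros Hw. rewrite K1 by auto. rewrite K2 by (auto; apply Xs_fresh_for; auto).
  apply sapply_agree. intros v Hv. destruct (v_eq_dec V v x) as [e|n].
  - subst. rewrite !upd_eq. cbn [sapply]. rewrite upd_eq. reflexivity.
  - rewrite !upd_neq by auto. unfold comp. rewrite upd_neq; auto.
    intro e; subst. apply Hw. apply vremove_In; auto.
Qed.

Definition wfresh {V : VarType} {C : Type} chi (G : context V C) (l : list V) : V :=
  Xp chi (dom G ++ l ++ flat_map (fun p => fv (snd p)) G).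

Lemma wfresh_spec {V : VarType} {C : Type} chi (Hchi : forall ns, ~ In (chi ns) ns) (G : context V C) l :
  ~ In (wfresh chi G l) (dom G) /\ ~ In (wfresh chi G l) l /\
  (forall v T, In (v, T) G -> ~ In (wfresh chi G l) (fv T)).
Proof.
  assert (H := Xp_fresh chi Hchi (dom G ++ l ++ flat_map (fun p => fv (snd p)) G)).
  fold (wfresh chi G l) in H.
  split; [|split].
  - intro h; apply H; apply in_or_app; auto.
  - intro h; apply H; apply in_or_app; right; apply in_or_app; auto.
  - intros v T Hi h. apply H; apply in_or_app; right; apply in_or_app; right.
    apply in_flat_map. exists (v, T); auto.
Qed.

Lemma subst_lemma {V : VarType} {C : Type} chi (Hchi : forall ns, ~ In (chi ns) ns) Ax Rl
  (G : context V C) M A :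
  typing chi Ax Rl G M A -> forall s D, wt_subst chi Ax Rl s G D -> wf chi Ax Rl D ->
  typing chi Ax Rl D (sapply chi M s) (sapply chi A s).
Proof.
  induction 1 as [G s1 s2 Hw Ha|G x A Hw Hi|G x A B s1 s2 s3 HR HA IHA HB IHB
                 |G x y A B M s1 s2 s3 HR HA IHA HB IHB HM IHM|G M N x A B s0 HM IHM HN IHN HB IHB
                 |G M A B s0 HM IHM Hc HB IHB]; intros s D Hwt HwD.
  - cbn [sapply]. constructor; auto.
  - apply Hwt; auto.
  - assert (HAs := IHA s D Hwt HwD). cbn [sapply] in HAs |- *.
    apply ty_prod with s1 s2; auto. intros z Hz.
    destruct (wfresh_spec chi Hchi G (fv A ++ fv B)) as (Hw1 & Hw2 & Hw3).
    set (w := wfresh chi G (fv A ++ fv B)) in *.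
    destruct (wt_ext chi Ax Rl s G D A w z s1 Hwt HwD HAs Hw1
                (fun h => Hw2 (in_or_app _ _ _ (or_introl h))) Hw3 Hz) as [Hwt' HwD'].
    assert (H1 := IHB w Hw1 _ _ Hwt' HwD'). cbn [sapply] in H1.
    eapply subj_alpha; eauto. apply ieq_body; auto.
    rewrite vremove_In; intros [h _]. apply Hw2; apply in_or_app; auto.
  - assert (HAs := IHA s D Hwt HwD). cbn [sapply] in HAs |- *.
    destruct (wfresh_spec chi Hchi G (fv A ++ fv B ++ fv M)) as (Hw1 & Hw2 & Hw3).
    set (w := wfresh chi G (fv A ++ fv B ++ fv M)) in *.
    assert (HBpart : forall z, ~ In z (dom D) ->
      typing chi Ax Rl ((z, sapply chi A s) :: D)
        (subst1 chi (sapply chi B (upd s y (var (Xs chi s (vremove (fv B) y)))))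
           (Xs chi s (vremove (fv B) y)) (var z)) (cst s2)).
    { intros z Hz.
      destruct (wt_ext chi Ax Rl s G D A w z s1 Hwt HwD HAs Hw1
                  (fun h => Hw2 (in_or_app _ _ _ (or_introl h))) Hw3 Hz) as [Hwt' HwD'].
      assert (H1 := IHB w Hw1 _ _ Hwt' HwD'). cbn [sapply] in H1.
      eapply subj_alpha; eauto. apply ieq_body; auto.
      rewrite vremove_In; intros [h _]. apply Hw2; apply in_or_app; right; apply in_or_app; auto. }
    apply ty_abs with s1 s2 s3; auto. intros z Hz.
    destruct (wt_ext chi Ax Rl s G D A w z s1 Hwt HwD HAs Hw1
                (fun h => Hw2 (in_or_app _ _ _ (or_introl h))) Hw3 Hz) as [Hwt' HwD'].
    assert (H1 := IHM w Hw1 _ _ Hwt' HwD').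
    apply ty_conv with (sapply chi (subst1 chi B y (var w)) (upd s w (var z))) s2; auto.
    + eapply subj_alpha; eauto. apply ieq_body; auto.
      rewrite vremove_In; intros [h _]. apply Hw2; apply in_or_app; right; apply in_or_app; auto.
    + apply ieq_conv; auto. apply ieq_body; auto.
      rewrite vremove_In; intros [h _]. apply Hw2; apply in_or_app; right; apply in_or_app; auto.
  - assert (H1 := IHM s D Hwt HwD). cbn [sapply] in H1 |- *.
    assert (H3 := IHB s D Hwt HwD). cbn [sapply] in H3.
    set (y := Xs chi s (vremove (fv B) x)) in *.
    assert (Heq : sapply chi (subst1 chi (sapply chi B (upd s x (var y))) y (sapply chi N s)) iota
                  = sapply chi (sapply chi (subst1 chi B x N) s) iota).
    { unfold y. rewrite K2 by (auto; apply Xs_fresh_for; auto). rewrite K1 by auto. auto. }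
    apply ty_conv with (subst1 chi (sapply chi B (upd s x (var y))) y (sapply chi N s)) s0; auto.
    + eapply ty_app; eauto. eapply subj_alpha; eauto.
    + apply ieq_conv; auto.
  - apply ty_conv with (sapply chi A s) s0.
    + apply IHM; auto.
    + apply bconv_subst; auto.
    + apply (IHB s D Hwt HwD).
Qed.

Theorem mainTheorem16 (V : VarType) (C : Type) (chi : list nat -> nat)
  (Hchi : forall ns, ~ In (chi ns) ns)
  (Ax : C -> C -> Prop) (Rl : C -> C -> C -> Prop)
  (Gamma Delta : context V C) (M A : term V C) (sigma : subst_t V C) :
  wt_subst chi Ax Rl sigma Gamma Delta ->
  wf chi Ax Rl Delta ->
  typing chi Ax Rl Gamma M A ->
  typing chi Ax Rl Delta (sapply chi M sigma) (sapply chi A sigma).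
Proof.
  intros Hwt Hw Ht. eapply subst_lemma; eauto.
Qed.
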